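(* For $i\ge 1$, let $\sigma_i$ be any permutation of the set of $2^i$ consecutive even numbers $$E_i=\{(4^i+2)/3,\ (4^i+8)/3,\ \ldots,\ (4^{i+1}-4)/3\}$$ that contains no 3-term arithmetic progression as a subsequence. Let $\pi_i$ be any permutation of the set of $2^{i-1}$ consecutive odd numbers $$O_i=\{(4^i+2)/6,\ (4^i+14)/6,\ \ldots,\ (4^{i+1}-6)/6\}$$ that contains no 3-term arithmetic progression as a subsequence. Then: (a) the concatenation $\sigma_1\pi_1\sigma_2\pi_2\sigma_3\pi_3\cdots$ is a permutation of the positive integers; (b) whenever an odd number $x$ occurs in this sequence before an even number $y$, we have $2x-y<0$; (c) the sequence contains no 4-term arithmetic progression with odd common difference as a subsequence.
   Context: A finite or infinite sequence contains a $k$-term arithmetic progression with common difference $d\neq0$ as a subsequence if there are positions $i_1<\cdots<i_k$ whose entries satisfy $a_{i_{m+1}}-a_{i_m}=d$ for all $1\le m<k$. The difference $d$ may be positive or negative. Permutations of finite sets of integers avoiding 3-term arithmetic progressions exist for every finite set of consecutive even numbers and every finite set of consecutive odd numbers. *)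

(* Defs.v *)
From HB Require Import structures.
From mathcomp Require Import all_boot all_order all_algebra.
Set Implicit Arguments. Unset Strict Implicit. Unset Printing Implicit Defensive.
Import Order.TTheory GRing.Theory Num.Theory.

(* A sequence (given by its entry function [a] on positions, with admissible
   positions [P]) contains a k-term AP with common difference d as a
   subsequence: positions f 0 < ... < f (k-1), all admissible, with
   a (f (m+1)) - a (f m) = d. *)
Definition has_AP (k : nat) (d : int) (a : nat -> int) (P : nat -> Prop) : Prop :=
  exists f : nat -> nat,
    (forall m, (m < k)%N -> P (f m)) /\
    (forall m, (m.+1 < k)%N -> (f m < f m.+1)%N) /\
    (forall m, (m.+1 < k)%N -> (a (f m.+1) - a (f m))%R = d).

Definition AP3_free (s : seq nat) : Prop :=
  forall d : int, d != 0%R ->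
    ~ has_AP 3 d (fun i => Posz (nth 0%N s i)) (fun i => (i < size s)%N).

Definition Eset (i : nat) : seq nat :=
  [seq x <- iota 0 (4 ^ i.+1) |
     ~~ odd x && (4 ^ i + 2 <= 3 * x)%N && (3 * x + 4 <= 4 ^ i.+1)%N].

Definition Oset (i : nat) : seq nat :=
  [seq x <- iota 0 (4 ^ i.+1) |
     odd x && (4 ^ i + 2 <= 6 * x)%N && (6 * x + 6 <= 4 ^ i.+1)%N].

Definition block (sigma pi : nat -> seq nat) (k : nat) : seq nat :=
  if odd k then pi (k./2).+1 else sigma (k./2).+1.

(* Entry at position n (0-based) of the infinite concatenation; correct since
   every block is nonempty (so the first n+1 blocks have length > n). *)
Definition concat_seq (sigma pi : nat -> seq nat) (n : nat) : nat :=
  nth 0%N (flatten [seq block sigma pi k | k <- iota 0 n.+1]) n.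

(* Main.v *)
Require Import Defs.
From HB Require Import structures.
From mathcomp Require Import all_boot all_order all_algebra.
From Stdlib Require Import Lia.
Import Order.TTheory GRing.Theory Num.Theory.

Ltac tonat := repeat match goal with
  | H : is_true (ssrnat.leq _ _) |- _ => move/ssrnat.leP: H => H
  end; try apply/ssrnat.leP; unfold addn, addn_rec, muln, muln_rec, subn, subn_rec in *.
Ltac nlia := tonat; lia.

Lemma pow4 i : (0 < i)%N -> exists m, 4 ^ i = 12 * m + 4.
Proof.
elim: i => // [[|i]] IH _; first by exists 0.
have [m Hm] := IH isT. exists (4 * m + 1). rewrite expnS Hm. nlia.
Qed.

Lemma find_i n z : (6 <= z)%N -> (z < 4 ^ n.+1 + 2)%N ->
  exists i, [/\ (0 < i)%N, (4 ^ i + 2 <= z)%N & (z < 4 ^ i.+1 + 2)%N].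
Proof.
elim: n => [|n IH] Hz Hn; first by move: Hn; rewrite expn1 => Hn; exfalso; nlia.
case: (ltnP z (4 ^ n.+1 + 2)) => H; first exact: IH.
by exists n.+1.
Qed.

Lemma find_i' z : (6 <= z)%N ->
  exists i, [/\ (0 < i)%N, (4 ^ i + 2 <= z)%N & (z < 4 ^ i.+1 + 2)%N].
Proof.
move=> Hz; apply: (@find_i z) => //.
have h := ltn_expl z.+1 (isT : 1 < 4)%N. nlia.
Qed.

Lemma memE i x : (x \in Eset i) = [&& ~~ odd x, (4^i+2 <= 3*x)%N & (3*x+4 <= 4^i.+1)%N].
Proof.
rewrite mem_filter mem_iota /= add0n -andbA.
case: (odd x) => //=; rewrite ?andbF //.
case: (_ <= _ * x)%N => //=.
case h: (_ * x + _ <= _)%N => //=.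
move/idP: h => h; apply/idP; nlia.
Qed.

Lemma memO i x : (x \in Oset i) = [&& odd x, (4^i+2 <= 6*x)%N & (6*x+6 <= 4^i.+1)%N].
Proof.
rewrite mem_filter mem_iota /= add0n -andbA.
case: (odd x) => //=; rewrite ?andbF //.
case: (_ <= _ * x)%N => //=.
case h: (_ * x + _ <= _)%N => //=.
move/idP: h => h; apply/idP; nlia.
Qed.

Lemma Eset_ne i : (0 < i)%N -> exists x, x \in Eset i.
Proof.
move=> Hi; have [m Hm] := pow4 i Hi. exists (4 * m + 2).
rewrite memE expnS Hm oddD oddM /=. apply/andP; split; nlia.
Qed.

Lemma Oset_ne i : (0 < i)%N -> exists x, x \in Oset i.
Proof.
move=> Hi; have [m Hm] := pow4 i Hi. exists (2 * m + 1).
rewrite memO expnS Hm oddD oddM /=. apply/andP; split; nlia.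
Qed.


Definition L (sigma pi : nat -> seq nat) N :=
  flatten [seq block sigma pi k | k <- iota 0 N].

Lemma memB sigma pi k v :
  (forall i, (0 < i)%N -> perm_eq (sigma i) (Eset i)) ->
  (forall i, (0 < i)%N -> perm_eq (pi i) (Oset i)) ->
  (v \in block sigma pi k) = if odd k then v \in Oset (k./2).+1 else v \in Eset (k./2).+1.
Proof.
move=> HS HP; rewrite /block; case: (odd k).
  by rewrite (perm_mem (HP _ (ltn0Sn _))).
by rewrite (perm_mem (HS _ (ltn0Sn _))).
Qed.

Lemma B_ne sigma pi k :
  (forall i, (0 < i)%N -> perm_eq (sigma i) (Eset i)) ->
  (forall i, (0 < i)%N -> perm_eq (pi i) (Oset i)) ->
  (0 < size (block sigma pi k))%N.
Proof.
move=> HS HP.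
have [v Hv] : exists v, v \in block sigma pi k.
  case Ok: (odd k).
    have [v Hv] := Oset_ne (k./2).+1 isT. exists v. by rewrite memB // Ok.
  have [v Hv] := Eset_ne (k./2).+1 isT. exists v. by rewrite memB // Ok.
by case: (block sigma pi k) Hv.
Qed.

Lemma B_uniq sigma pi k :
  (forall i, (0 < i)%N -> perm_eq (sigma i) (Eset i)) ->
  (forall i, (0 < i)%N -> perm_eq (pi i) (Oset i)) ->
  uniq (block sigma pi k).
Proof.
move=> HS HP; rewrite /block; case: (odd k).
  by rewrite (perm_uniq (HP _ (ltn0Sn _))) filter_uniq // iota_uniq.
by rewrite (perm_uniq (HS _ (ltn0Sn _))) filter_uniq // iota_uniq.
Qed.

Lemma B_pos sigma pi k v :
  (forall i, (0 < i)%N -> perm_eq (sigma i) (Eset i)) ->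
  (forall i, (0 < i)%N -> perm_eq (pi i) (Oset i)) ->
  v \in block sigma pi k -> (0 < v)%N.
Proof.
move=> HS HP; rewrite memB //; case: (odd k).
  rewrite memO => /and3P[_ h _]. have h2 := expn_gt0 4 (k./2).+1. nlia.
rewrite memE => /and3P[_ h _]. nlia.
Qed.

Lemma B_disj sigma pi k1 k2 v :
  (forall i, (0 < i)%N -> perm_eq (sigma i) (Eset i)) ->
  (forall i, (0 < i)%N -> perm_eq (pi i) (Oset i)) ->
  v \in block sigma pi k1 -> v \in block sigma pi k2 -> k1 = k2.
Proof.
move=> HS HP; rewrite !memB // => H1 H2.
have E1 := odd_double_half k1; have E2 := odd_double_half k2.
suff: (k1./2 = k2./2) /\ odd k1 = odd k2.
  case=> e1 e2; rewrite -E1 -E2 e1 e2 //.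
have key : forall i j, (4 ^ i.+1 <= 4 ^ j)%N \/ (4 ^ j.+1 <= 4 ^ i)%N \/ i = j.
  move=> i j; case: (ltngtP i j) => h.
  - by left; rewrite leq_exp2l.
  - by right; left; rewrite leq_exp2l.
  - by right; right.
move: H1 H2; case: (odd k1) E1; case: (odd k2) E2 => E2 E1;
  rewrite ?memO ?memE => /and3P[o1 a1 b1] /and3P[o2 a2 b2];
  try (by move: o1 o2; case: (odd v));
  split => //;
  case: (key (k1./2).+1 (k2./2).+1) => [h|[h|[]//]]; exfalso; nlia.
Qed.

Lemma L_cat sigma pi N M : (N <= M)%N ->
  L sigma pi M = L sigma pi N ++ flatten [seq block sigma pi k | k <- iota N (M - N)].
Proof.
by move=> h; rewrite /L -{1}(subnKC h) iotaD add0n map_cat flatten_cat.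
Qed.

Lemma L_S sigma pi N : L sigma pi N.+1 = L sigma pi N ++ block sigma pi N.
Proof. by rewrite (@L_cat sigma pi N N.+1 (leqnSn N)) subSnn /= cats0. Qed.

Lemma L_size sigma pi N :
  (forall i, (0 < i)%N -> perm_eq (sigma i) (Eset i)) ->
  (forall i, (0 < i)%N -> perm_eq (pi i) (Oset i)) ->
  (N <= size (L sigma pi N))%N.
Proof.
move=> HS HP; elim: N => // N IH.
rewrite L_S size_cat. have h := B_ne sigma pi N HS HP. nlia.
Qed.

Lemma mem_L sigma pi v N : v \in L sigma pi N ->
  exists k, (k < N)%N /\ v \in block sigma pi k.
Proof.
case/flattenP => s /mapP [k]; rewrite mem_iota => /andP[_ hk] -> hv.
by exists k.
Qed.

Lemma mem_L2 sigma pi k N v : (k < N)%N -> v \in block sigma pi k -> v \in L sigma pi N.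
Proof.
move=> hk hv; apply/flattenP; exists (block sigma pi k) => //.
by apply/mapP; exists k => //; rewrite mem_iota.
Qed.

Lemma L_uniq sigma pi N :
  (forall i, (0 < i)%N -> perm_eq (sigma i) (Eset i)) ->
  (forall i, (0 < i)%N -> perm_eq (pi i) (Oset i)) ->
  uniq (L sigma pi N).
Proof.
move=> HS HP; elim: N => // N IH.
rewrite L_S cat_uniq IH B_uniq // andbT /=.
apply/hasPn => v hv; apply/negP => /mem_L [k [hk hv']].
have := @B_disj sigma pi _ _ _ HS HP hv' hv. move=> e; rewrite e ltnn in hk. done.
Qed.

Lemma a_L sigma pi n N :
  (forall i, (0 < i)%N -> perm_eq (sigma i) (Eset i)) ->
  (forall i, (0 < i)%N -> perm_eq (pi i) (Oset i)) ->
  (n < size (L sigma pi N))%N -> concat_seq sigma pi n = nth 0%N (L sigma pi N) n.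
Proof.
move=> HS HP h.
have e1 := @L_cat sigma pi N _ (leq_maxl N n.+1).
have e2 := @L_cat sigma pi n.+1 _ (leq_maxr N n.+1).
rewrite /concat_seq. change (flatten _) with (L sigma pi n.+1).
transitivity (nth 0%N (L sigma pi (maxn N n.+1)) n).
  rewrite e2 nth_cat ifT //. exact: L_size.
by rewrite e1 nth_cat h.
Qed.

Lemma dz2 n : (2 %| Posz n)%Z = (2 %| n)%N.
Proof. rewrite dvdzE /=. reflexivity. Qed.
Lemma dz2N n : (2 %| (- Posz n)%R)%Z = (2 %| n)%N.
Proof. rewrite (dvdzE 2 (- Posz n)%R) abszN -dvdzE. exact: dz2. Qed.
Lemma subzN (x y : nat) : (y < x)%N -> (Posz y - Posz x = - Posz (x - y))%R.
Proof. move=> h. rewrite -(subzn (ltnW h)). exact: (esym (opprB (Posz x) (Posz y))). Qed.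
Lemma par (x y : nat) (d : int) : (Posz y - Posz x = d)%R -> ~~ (2 %| d)%Z -> odd y = ~~ odd x.
Proof.
move=> <-.
case: (leqP x y) => h.
- rewrite (subzn h) dz2 dvdn2 oddB // negbK. by case: (odd y); case: (odd x).
- rewrite (@subzN x y h) dz2N dvdn2 (oddB (ltnW h)) negbK. by case: (odd y); case: (odd x).
Qed.
Lemma mid (x y z : int) : (y - x = z - y)%R -> (y + y = x + z)%R.
Proof.
move=> h; apply/eqP; rewrite -subr_eq0 opprD addrACA h addrA (subrK y z) subrr eqxx.
exact isT.
Qed.
Lemma midn (x y z : nat) : (Posz y - Posz x = Posz z - Posz y)%R -> y + y = x + z.
Proof. move=> /mid; rewrite -!PoszD => /eqP; rewrite eqz_nat => /eqP. done. Qed.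

Lemma cover sigma pi y :
  (forall i, (0 < i)%N -> perm_eq (sigma i) (Eset i)) ->
  (forall i, (0 < i)%N -> perm_eq (pi i) (Oset i)) ->
  (0 < y)%N -> exists k, y \in block sigma pi k.
Proof.
move=> HS HP hy.
have E := odd_double_half y; rewrite -mul2n in E.
case Oy: (odd y); rewrite Oy /= in E.
- have [i [hi a b]] : exists i, [/\ (0 < i)%N, (4 ^ i + 2 <= 6 * y)%N & (6 * y < 4 ^ i.+1 + 2)%N].
    apply: find_i'; nlia.
  have [m Hm] := pow4 i.+1 isT.
  exists (i.-1).*2.+1. rewrite memB //= odd_double /= uphalf_double prednK //.
  rewrite memO Oy /=. rewrite Hm in b *. apply/andP; split => //; nlia.
- have [i [hi a b]] : exists i, [/\ (0 < i)%N, (4 ^ i + 2 <= 3 * y)%N & (3 * y < 4 ^ i.+1 + 2)%N].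
    apply: find_i'; nlia.
  have [m Hm] := pow4 i.+1 isT.
  exists (i.-1).*2. rewrite memB //= odd_double /= doubleK prednK //.
  rewrite memE Oy /=. rewrite Hm in b *. apply/andP; split => //; nlia.
Qed.

Theorem mainTheorem6 (sigma pi : nat -> seq nat) :
  (forall i, (0 < i)%N -> perm_eq (sigma i) (Eset i) /\ AP3_free (sigma i)) ->
  (forall i, (0 < i)%N -> perm_eq (pi i) (Oset i) /\ AP3_free (pi i)) ->
  let a := concat_seq sigma pi in
  (* (a) a permutation of the positive integers *)
  ((injective a /\ (forall n, (0 < a n)%N) /\
    (forall y, (0 < y)%N -> exists n, a n = y)) /\
  (* (b) odd x before even y implies 2x - y < 0 *)
   (forall p q, (p < q)%N -> odd (a p) -> ~~ odd (a q) ->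
      (2 * Posz (a p) - Posz (a q) < 0)%R) /\
  (* (c) no 4-term AP with odd common difference *)
   (forall d : int, ~~ (2 %| d)%Z ->
      ~ has_AP 4 d (fun n => Posz (a n)) (fun _ => True))).
Proof.
move=> HS' HP' a.
have HS : forall i, (0 < i)%N -> perm_eq (sigma i) (Eset i) by move=> i hi; case: (HS' i hi).
have HP : forall i, (0 < i)%N -> perm_eq (pi i) (Oset i) by move=> i hi; case: (HP' i hi).
have aL : forall n N, (n < size (L sigma pi N))%N -> a n = nth 0%N (L sigma pi N) n.
  by move=> n N h; apply: a_L.
have szL : forall n N, (n < N)%N -> (n < size (L sigma pi N))%N.
  move=> n N h; apply: (leq_trans h); exact: L_size.
have inL : forall n N, (n < N)%N -> a n \in L sigma pi N.
  by move=> n N h; rewrite (aL n N (szL _ _ h)); apply: mem_nth; apply: szL.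
have pos : forall n, (0 < a n)%N.
  move=> n; have [k [_ hk]] := @mem_L _ _ _ _ (inL n n.+1 (ltnSn n)).
  exact: (@B_pos _ _ _ _ HS HP hk).
have partb : forall p q, (p < q)%N -> odd (a p) -> ~~ odd (a q) -> (2 * a p < a q)%N.
  move=> p q hpq ox ey.
  have [kx [_ hx]] := @mem_L _ _ _ _ (inL p q.+1 (ltnW hpq)).
  have [ky [_ hy]] := @mem_L _ _ _ _ (inL q q.+1 (ltnSn q)).
  have hx' := hx; have hy' := hy.
  rewrite memB // in hx; rewrite memB // in hy.
  have Ekx := odd_double_half kx; have Eky := odd_double_half ky.
  rewrite -mul2n in Ekx; rewrite -mul2n in Eky.
  case Okx : (odd kx) hx Ekx => hx Ekx; last by rewrite memE in hx; case/and3P: hx => h _ _; rewrite ox in h.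
  case Oky : (odd ky) hy Eky => hy Eky; first by rewrite memO in hy; case/and3P: hy => h _ _; rewrite h in ey.
  rewrite ltnNge; apply/negP => hle.
  rewrite memO in hx; case/and3P: hx => _ _ bx.
  rewrite memE in hy; case/and3P: hy => _ ay _.
  have hj : (ky./2 <= kx./2)%N.
    rewrite leqNgt; apply/negP => hlt.
    have h4 : (4 ^ (kx./2).+2 <= 4 ^ (ky./2).+1)%N by rewrite leq_exp2l.
    nlia.
  move: Ekx Eky => /= Ekx Eky.
  have hk : (ky < kx)%N by nlia.
  set N2 := maxn q.+1 kx.
  have eN := @L_cat sigma pi kx N2 (leq_maxr _ _).
  have ip : index (a p) (L sigma pi N2) = p.
    rewrite (aL p N2); last by apply: szL; exact: (leq_trans hpq (leq_trans (leqnSn q) (leq_maxl _ _))).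
    apply: index_uniq; last exact: (@L_uniq _ _ _ HS HP).
    by apply: szL; exact: (leq_trans hpq (leq_trans (leqnSn q) (leq_maxl _ _))).
  have iq : index (a q) (L sigma pi N2) = q.
    rewrite (aL q N2); last by apply: szL; apply: leq_maxl.
    apply: index_uniq; last exact: (@L_uniq _ _ _ HS HP).
    by apply: szL; apply: leq_maxl.
  have yin : a q \in L sigma pi kx := @mem_L2 _ _ _ _ _ hk hy'.
  have xnin : a p \notin L sigma pi kx.
    apply/negP => /(@mem_L _ _ _ _) [k [hk2 hk3]].
    have e := @B_disj sigma pi _ _ _ HS HP hk3 hx'. by rewrite e ltnn in hk2.
  move: ip iq; rewrite eN !index_cat yin (negbTE xnin) => ip iq.
  have := index_mem (a q) (L sigma pi kx); rewrite yin iq => /idP h.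
  nlia.
split; [split; [|split]|split].
- move=> p q e. set N := (maxn p q).+1.
  have hp : (p < size (L sigma pi N))%N by apply: szL; rewrite ltnS leq_maxl.
  have hq : (q < size (L sigma pi N))%N by apply: szL; rewrite ltnS leq_maxr.
  rewrite (aL p N hp) (aL q N hq) in e.
  apply/eqP; rewrite -(nth_uniq 0%N hp hq (@L_uniq _ _ N HS HP)); exact/eqP.
- exact: pos.
- move=> y hy; have [k hk] := @cover _ _ _ HS HP hy.
  have hin : y \in L sigma pi k.+1 := @mem_L2 _ _ _ _ _ (ltnSn k) hk.
  exists (index y (L sigma pi k.+1)).
  by rewrite (aL _ k.+1) ?index_mem // nth_index.
- move=> p q hpq ox ey; have h := partb p q hpq ox ey.
  by rewrite subr_lt0 -[2%R]/(Posz 2) -PoszM ltz_nat.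
- move=> d hd [f [_ [hf hd']]].
  have e0 := hd' 0 isT; have e1 := hd' 1 isT; have e2 := hd' 2 isT.
  rewrite /= in e0 e1 e2.
  have p1 := @par _ _ _ e0 hd; have p2 := @par _ _ _ e1 hd; have p3 := @par _ _ _ e2 hd.
  have m1 : a (f 1) + a (f 1) = a (f 0) + a (f 2) by apply: midn; rewrite e0 e1.
  have m2 : a (f 2) + a (f 2) = a (f 1) + a (f 3) by apply: midn; rewrite e1 e2.
  have h12 := hf 1 isT; have h23 := hf 2 isT.
  case Ob0: (odd (a (f 0))); rewrite Ob0 /= in p1; rewrite p1 /= in p2; rewrite p2 /= in p3.
  + have h := partb _ _ h23 (ltac:(by rewrite p2)) (ltac:(by rewrite p3)).
    nlia.
  + have h := partb _ _ h12 (ltac:(by rewrite p1)) (ltac:(by rewrite p2)).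
    nlia.
Qed.
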